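(* For all integers $c\geq 1$, $$\sum_{n\geq 0}\bar a_c(2n)q^n=\frac{f_2^{c-1}f_4^5}{f_1^{2c+2}f_8^2},\qquad \sum_{n\geq 0}\bar a_c(2n+1)q^n=2\,\frac{f_8^2}{f_4}\left(\frac{f_2}{f_1^2}\right)^{c+1}.$$
   Context: For an integer $k\geq 1$ let $f_k:=\prod_{n\geq 1}(1-q^{kn})$. For an integer $c\geq1$, the generalized overcubic partition function $\bar a_c(n)$ is defined by the generating function $\sum_{n\geq 0}\bar a_c(n)q^n=\dfrac{f_4^{c-1}}{f_1^2f_2^{2c-3}}$. *)

(* Defs.v *)
From mathcomp Require Import all_boot all_order all_algebra.
Set Implicit Arguments. Unset Strict Implicit. Unset Printing Implicit Defensive.
Import Order.TTheory GRing.Theory Num.Theory.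
Local Open Scope ring_scope.

Definition fps := nat -> int.

Definition fps_mul (F G : fps) : fps :=
  fun n => \sum_(i < n.+1) F i * G (n - i)%N.

Definition fps_one : fps := fun n => if n == 0%N then 1 else 0.

Definition fps_scale (a : int) (F : fps) : fps := fun n => a * F n.

Fixpoint fps_exp (F : fps) (k : nat) : fps :=
  match k with 0 => fps_one | k.+1 => fps_mul F (fps_exp F k) end.

(* Multiplicative inverse of a power series with constant term 1:
   first n+1 coefficients, computed by the standard recurrence. *)
Fixpoint inv_seq (F : fps) (n : nat) : seq int :=
  match n with
  | 0 => [:: 1]
  | m.+1 => let s := inv_seq F m in
            rcons s (- \sum_(i < m.+1) F (m.+1 - i)%N * nth 0 s i)
  end.

Definition fps_inv (F : fps) : fps := fun n => nth 0 (inv_seq F n) n.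

(* integer powers (negative powers via the inverse; used only for series
   with constant term 1) *)
Definition fps_zpow (F : fps) (z : int) : fps :=
  match z with
  | Posz n => fps_exp F n
  | Negz n => fps_exp (fps_inv F) n.+1
  end.

(* f_k = prod_{j>=1} (1 - q^{kj}); for k >= 1 the coefficient of q^n only
   depends on the factors with j <= n. *)
Definition fk (k : nat) : fps :=
  fun n => (\prod_(1 <= j < n.+1) (1 - 'X^(k * j)) : {poly int})`_n.

Definition abar (c : nat) : fps :=
  fps_mul (fps_exp (fk 4) (c.-1))
    (fps_mul (fps_zpow (fk 1) (-2)) (fps_zpow (fk 2) (3%:Z - 2%:Z * c%:Z))).

(* Main.v *)
Require Import Defs.
From HB Require Import structures.
From mathcomp Require Import all_boot all_order all_algebra.
From mathcomp Require Import boolp.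
From mathcomp Require Import zify ring.
Set Implicit Arguments. Unset Strict Implicit. Unset Printing Implicit Defensive.
Import Order.TTheory GRing.Theory Num.Theory.
Local Open Scope ring_scope.

HB.instance Definition _ := gen_eqMixin fps.
HB.instance Definition _ := gen_choiceMixin fps.

Definition fps0 : fps := fun _ => 0.
Definition fpsadd (F G : fps) : fps := fun n => F n + G n.
Definition fpsopp (F : fps) : fps := fun n => - F n.

Lemma fpsext (F G : fps) : (forall n, F n = G n) -> F = G.
Proof. move=> h; exact: functional_extensionality_dep. Qed.

Lemma fpsaddA : associative fpsadd.
Proof. by move=> F G H; apply: fpsext => n; rewrite /fpsadd addrA. Qed.
Lemma fpsaddC : commutative fpsadd.
Proof. by move=> F G; apply: fpsext => n; rewrite /fpsadd addrC. Qed.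
Lemma fpsadd0 : left_id fps0 fpsadd.
Proof. by move=> F; apply: fpsext => n; rewrite /fpsadd /fps0 add0r. Qed.
Lemma fpsaddN : left_inverse fps0 fpsopp fpsadd.
Proof. by move=> F; apply: fpsext => n; rewrite /fpsadd /fpsopp /fps0 addNr. Qed.

HB.instance Definition _ := GRing.isZmodule.Build fps fpsaddA fpsaddC fpsadd0 fpsaddN.

Definition tp (N : nat) (F : fps) : {poly int} := \poly_(i < N.+1) F i.
Definition agree (N : nat) (F : fps) (p : {poly int}) := forall j, (j <= N)%N -> F j = p`_j.

Lemma agree_tp N F : agree N F (tp N F).
Proof. by move=> j hj; rewrite coef_poly ltnS hj. Qed.

Lemma agree_mul N F G p r : agree N F p -> agree N G r -> agree N (fps_mul F G) (p * r).
Proof.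
move=> hF hG j hj; rewrite coefM /fps_mul; apply: eq_bigr => i _.
have hi := ltn_ord i; rewrite hF ?hG //; lia.
Qed.

Lemma agree_add N F G p r : agree N F p -> agree N G r -> agree N (F + G) (p + r).
Proof. by move=> hF hG j hj; rewrite coefD -hF // -hG. Qed.

Lemma agree_one N : agree N fps_one 1.
Proof. by move=> j _; rewrite coefC /fps_one. Qed.

Lemma agree_eq N F G p : agree N F p -> agree N G p -> F N = G N.
Proof. by move=> h1 h2; rewrite h1 // h2. Qed.

Lemma fpsmulA : associative fps_mul.
Proof.
move=> F G H; apply: fpsext => n.
apply: (@agree_eq n (fps_mul F (fps_mul G H)) (fps_mul (fps_mul F G) H) (tp n F * (tp n G * tp n H))).
  by apply: agree_mul; [|apply: agree_mul]; apply: agree_tp.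
rewrite mulrA; by apply: agree_mul; [apply: agree_mul|]; apply: agree_tp.
Qed.
Lemma fpsmulC : commutative fps_mul.
Proof.
move=> F G; apply: fpsext => n.
apply: (@agree_eq n (fps_mul F G) (fps_mul G F) (tp n F * tp n G)).
  by apply: agree_mul; apply: agree_tp.
rewrite mulrC; by apply: agree_mul; apply: agree_tp.
Qed.
Lemma fpsmul1 : left_id fps_one fps_mul.
Proof.
move=> F; apply: fpsext => n.
apply: (@agree_eq n (fps_mul fps_one F) F (1 * tp n F)); first by apply: agree_mul; [apply: agree_one|apply: agree_tp].
by rewrite mul1r; apply: agree_tp.
Qed.
Lemma fpsmulDl : left_distributive fps_mul fpsadd.
Proof.
move=> F G H; apply: fpsext => n.
apply: (@agree_eq n (fps_mul (fpsadd F G) H) (fpsadd (fps_mul F H) (fps_mul G H)) ((tp n F + tp n G) * tp n H)).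
  by apply: agree_mul; [apply: (@agree_add n F G)|]; apply: agree_tp.
rewrite mulrDl; apply: (@agree_add n (fps_mul F H) (fps_mul G H)); apply: agree_mul; apply: agree_tp.
Qed.
Lemma fpsone0 : fps_one != 0 :> fps.
Proof. apply/eqP => h; have := congr1 (fun F : fps => F 0%N) h; by rewrite /fps_one. Qed.

HB.instance Definition _ := GRing.Zmodule_isComNzRing.Build fps fpsmulA fpsmulC fpsmul1 fpsmulDl fpsone0.

Lemma fps_mulE (F G : fps) : fps_mul F G = F * G. Proof. by []. Qed.
Lemma fps_oneE : fps_one = 1 :> fps. Proof. by []. Qed.
Lemma fps_expE (F : fps) k : fps_exp F k = F ^+ k.
Proof. by elim: k => [|k ih] //=; rewrite ih exprS. Qed.
Lemma fps_addE (F G : fps) n : (F + G) n = F n + G n. Proof. by []. Qed.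
Lemma fps_oppE (F : fps) n : (- F) n = - F n. Proof. by []. Qed.
Lemma fps0E n : (0 : fps) n = 0. Proof. by []. Qed.
Lemma agree_tp_ N F : agree N F (tp N F). Proof. exact: agree_tp. Qed.

Implicit Types F G H : fps.

Lemma fps1E n : (1 : fps) n = if n == 0%N then 1 else 0. Proof. by []. Qed.
Lemma fpsMC (F G : fps) n : (F * G) n = \sum_(i < n.+1) F i * G (n - i)%N. Proof. by []. Qed.

Lemma inv_seq_size F n : size (inv_seq F n) = n.+1.
Proof. by elim: n => [|n ih] //=; rewrite size_rcons ih. Qed.

Lemma inv_seq_nth F m i : (i <= m)%N -> nth 0 (inv_seq F m) i = fps_inv F i.
Proof.
elim: m => [|m ih] hi; first by move: hi; rewrite leqn0 => /eqP ->.
case: (ltngtP i m.+1) => h; first 1 last; first by move: h; rewrite ltnNge hi.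
  by rewrite h.
rewrite /= nth_rcons inv_seq_size h; exact: ih.
Qed.

Lemma fps_invS F m : fps_inv F m.+1 = - \sum_(i < m.+1) F (m.+1 - i)%N * fps_inv F i.
Proof.
rewrite {1}/fps_inv /= nth_rcons inv_seq_size ltnn eqxx; congr (- _).
apply: eq_bigr => i _; rewrite inv_seq_nth //; exact: (ltn_ord i).
Qed.

Lemma fps_invP F : F 0%N = 1 -> F * fps_inv F = 1.
Proof.
move=> h0; rewrite mulrC; apply: fpsext => n; rewrite fpsMC fps1E.
case: n => [|m]; first by rewrite big_ord1 h0 mulr1.
rewrite big_ord_recr /= subnn h0 mulr1 fps_invS.
rewrite [X in X + _](_ : _ = \sum_(i < m.+1) F (m.+1 - i)%N * fps_inv F i) ?addrN //.
by apply: eq_bigr => i _; rewrite mulrC.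
Qed.

Lemma inv_uniq (F G H : fps) : F * G = 1 -> F * H = 1 -> G = H.
Proof. by move=> h1 h2; rewrite -[G]mul1r -h2 mulrAC h1 mul1r. Qed.

Definition emb (p : {poly int}) : fps := fun n => p`_n.
Lemma iota_nmod : (emb 0 = 0) * {morph emb : x y / x + y}.
Proof. by split; [|move=> x y]; apply: fpsext => n; rewrite /emb ?coef0 ?coefD. Qed.
HB.instance Definition _ := GRing.isNmodMorphism.Build {poly int} fps emb iota_nmod.
Lemma agree_iota N p : agree N (emb p) p. Proof. by []. Qed.
Lemma iota_monoid : monoid_morphism emb.
Proof.
split; first by apply: fpsext => n; rewrite /emb coef1 fps1E; case: (n == 0%N).
move=> x y; apply: fpsext => n.
apply: (@agree_eq n (emb (x * y)) (fps_mul (emb x) (emb y)) (x * y)) => //.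
exact: agree_mul.
Qed.
HB.instance Definition _ := GRing.isMonoidMorphism.Build {poly int} fps emb iota_monoid.

Definition eqN N (F G : fps) := forall i, (i <= N)%N -> F i = G i.
Lemma eqN_refl N F : eqN N F F. Proof. by []. Qed.
Lemma eqN_sym N F G : eqN N F G -> eqN N G F. Proof. by move=> h i hi; rewrite h. Qed.
Lemma eqN_trans N F G H : eqN N F G -> eqN N G H -> eqN N F H.
Proof. by move=> h1 h2 i hi; rewrite h1 ?h2. Qed.
Lemma eqN_eq N F G : F = G -> eqN N F G. Proof. by move=> ->. Qed.
Lemma eqN_add N F F' G G' : eqN N F F' -> eqN N G G' -> eqN N (F + G) (F' + G').
Proof. by move=> h1 h2 i hi; rewrite !fps_addE h1 ?h2. Qed.
Lemma eqN_opp N F F' : eqN N F F' -> eqN N (- F) (- F').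
Proof. by move=> h1 i hi; rewrite !fps_oppE h1. Qed.
Lemma eqN_mul N F F' G G' : eqN N F F' -> eqN N G G' -> eqN N (F * G) (F' * G').
Proof.
move=> h1 h2 i hi.
have e1 : tp N F = tp N F'.
  by apply/polyP => j; rewrite !coef_poly; case: ifP => // hj; rewrite h1.
have e2 : tp N G = tp N G'.
  by apply/polyP => j; rewrite !coef_poly; case: ifP => // hj; rewrite h2.
rewrite -!fps_mulE (@agree_mul N F G _ _ (@agree_tp N F) (@agree_tp N G) i hi) //.
by rewrite (@agree_mul N F' G' _ _ (@agree_tp N F') (@agree_tp N G') i hi) // e1 e2.
Qed.
Lemma eqN_mulr N F G H : eqN N F G -> eqN N (F * H) (G * H).
Proof. by move=> h; apply: eqN_mul. Qed.
Lemma eqN_mull N F G H : eqN N F G -> eqN N (H * F) (H * G).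
Proof. by move=> h; apply: eqN_mul. Qed.
Lemma eqN_exp N F G k : eqN N F G -> eqN N (F ^+ k) (G ^+ k).
Proof. by move=> h; elim: k => [|k ih]; rewrite ?expr0 // !exprS; apply: eqN_mul. Qed.
Lemma eqN_sum N (I : Type) (r : seq I) (P : pred I) (F G : I -> fps) :
  (forall i, P i -> eqN N (F i) (G i)) ->
  eqN N (\sum_(i <- r | P i) F i) (\sum_(i <- r | P i) G i).
Proof.
move=> h; apply: (big_ind2 (eqN N)) => //; [exact: eqN_add].
Qed.
Lemma eqN_all F G : (forall N, eqN N F G) -> F = G.
Proof. by move=> h; apply: fpsext => n; apply: (h n). Qed.

Lemma eqN_Xn0 N s F : (N < s)%N -> eqN N (emb ('X^s) * F) 0.
Proof.
move=> hs i hi.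
rewrite -fps_mulE (@agree_mul N (emb ('X^s)) F _ _ (@agree_iota N _) (@agree_tp N F)) //.
by rewrite coefXnM ifT //; lia.
Qed.

Lemma eqN_inv N F G F' G' : eqN N F G -> F * F' = 1 -> G * G' = 1 -> eqN N F' G'.
Proof.
move=> h h1 h2.
have e : F' = F' * G * G' by rewrite -mulrA h2 mulr1.
have e' : G' = F' * F * G' by rewrite (mulrC F') h1 mul1r.
rewrite e {2}e'; apply: eqN_mulr; apply: eqN_mull; exact: eqN_sym.
Qed.

Definition Xf : fps := emb 'X.
Lemma XfS F n : (Xf * F) n.+1 = F n.
Proof.
rewrite -fps_mulE (@agree_mul n.+1 Xf F _ _ (@agree_iota _ _) (@agree_tp n.+1 F)) //.
by rewrite coefXM /= coef_poly ltnS leqnSn.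
Qed.
Lemma Xf0 F : (Xf * F) 0%N = 0.
Proof.
by rewrite -fps_mulE (@agree_mul 0 Xf F _ _ (@agree_iota _ _) (@agree_tp 0 F)) // coefXM.
Qed.

Definition dl (d : nat) F : fps := fun n => if (d.+1 %| n)%N then F (n %/ d.+1)%N else 0.

Lemma agree_dl N d F p : agree N F p -> agree N (dl d F) (p \Po 'X^(d.+1)).
Proof.
move=> h j hj; rewrite /dl coef_comp_poly_Xn //; case: ifP => // _.
apply: h; exact: leq_trans (leq_div _ _) hj.
Qed.

Lemma dl_nmod d : (dl d 0 = 0) * {morph dl d : x y / x + y}.
Proof.
split; first by apply: fpsext => n; rewrite /dl; case: ifP.
move=> x y; apply: fpsext => n; rewrite /dl !fps_addE; case: ifP => _ //; by rewrite addr0.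
Qed.
HB.instance Definition _ d := GRing.isNmodMorphism.Build fps fps (dl d) (dl_nmod d).

Lemma dl_monoid d : monoid_morphism (dl d).
Proof.
split.
  apply: fpsext => n.
  apply: (@agree_eq n (dl d 1) 1 (1 \Po 'X^(d.+1))); first exact: agree_dl (@agree_one n).
  rewrite rmorph1; exact: agree_one.
move=> F G; apply: fpsext => n.
apply: (@agree_eq n (dl d (F * G)) (dl d F * dl d G) ((tp n F * tp n G) \Po 'X^(d.+1))).
  by apply: agree_dl; apply: agree_mul; apply: agree_tp.
rewrite comp_polyM; rewrite -fps_mulE; apply: agree_mul; apply: agree_dl; apply: agree_tp.
Qed.
HB.instance Definition _ d := GRing.isMonoidMorphism.Build fps fps (dl d) (dl_monoid d).

Lemma dl1_even G n : dl 1 G (2 * n)%N = G n.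
Proof. by rewrite /dl dvdn_mulr // mulKn. Qed.
Lemma dl1_odd G n : dl 1 G (2 * n).+1 = 0.
Proof. by rewrite /dl ifF //; apply/negbTE; rewrite dvdn2 /= -dvdn2 dvdn_mulr. Qed.

Lemma iota_comp d (p : {poly int}) : emb (p \Po 'X^(d.+1)) = dl d (emb p).
Proof. by apply: fpsext => n; rewrite /emb /dl coef_comp_poly_Xn. Qed.

Lemma eqN_dl N d F G : eqN N F G -> eqN N (dl d F) (dl d G).
Proof.
move=> h i hi; rewrite /dl; case: ifP => // _; apply: h; exact: leq_trans (leq_div _ _) hi.
Qed.

Definition EP (k m : nat) : {poly int} := \prod_(0 <= j < m) (1 - 'X^(k * j.+1)).

Lemma fkE k n : fk k n = (EP k n)`_n.
Proof. by rewrite /fk /EP big_add1. Qed.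

Lemma prod_low (s : nat) (a : nat -> nat) m m' :
  (forall j, (m <= j < m')%N -> (s <= a j)%N) ->
  exists r, \prod_(m <= j < m') (1 - 'X^(a j)) = 1 + 'X^s * r :> {poly int}.
Proof.
move=> h; rewrite big_seq.
apply: (big_ind (fun p : {poly int} => exists r, p = 1 + 'X^s * r)).
- by exists 0; rewrite mulr0 addr0.
- move=> x y [r1 ->] [r2 ->]; exists (r1 + r2 + 'X^s * r1 * r2); ring.
- move=> j; rewrite mem_index_iota => /h hs; exists (- 'X^(a j - s)).
  by rewrite mulrN -exprD subnKC.
Qed.

Lemma coef_low (p r : {poly int}) s i : (i < s)%N -> (p * (1 + 'X^s * r))`_i = p`_i.
Proof. by move=> hi; rewrite mulrDr mulr1 coefD mulrCA coefXnM hi addr0. Qed.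

Lemma EP_stable k m m' i : (m <= m')%N -> (forall j, (m <= j < m')%N -> (i < k * j.+1)%N) ->
  (EP k m')`_i = (EP k m)`_i.
Proof.
move=> hm h; rewrite /EP (@big_cat_nat _ _ _ m 0 m') //.
have [r ->] := @prod_low i.+1 (fun j => k * j.+1)%N m m' h; exact: coef_low.
Qed.

Lemma fk_eqN k N n : (0 < k)%N -> (N <= n)%N -> eqN N (fk k) (emb (EP k n)).
Proof.
move=> hk hn i hi; rewrite fkE /emb (@EP_stable k i n i) //; first lia.
move=> j hj; have := leq_pmull j.+1 hk; lia.
Qed.

Lemma fk0 k : fk k 0 = 1.
Proof. by rewrite fkE /EP big_geq // coef1. Qed.

Lemma EP_comp k m d : EP k m \Po 'X^(d.+1) = EP (d.+1 * k) m.
Proof.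
rewrite /EP rmorph_prod /=; apply: eq_bigr => j _.
by rewrite rmorphB rmorph1 /= comp_Xn_poly -exprM mulnA.
Qed.

Lemma dl_fk d k : (0 < k)%N -> dl d (fk k) = fk (d.+1 * k).
Proof.
move=> hk; apply: fpsext => n; rewrite /dl !fkE -EP_comp coef_comp_poly_Xn //.
case: ifP => // _; symmetry; apply: EP_stable; first exact: leq_div.
move=> j hj; have := leq_pmull j.+1 hk; lia.
Qed.

Section QB.
Variable R : comRingType.
Implicit Types Q x y : R.

Fixpoint qb Q (n k : nat) : R :=
  match n, k with
  | _, 0 => 1
  | 0, _.+1 => 0
  | n'.+1, k'.+1 => qb Q n' k' + Q ^+ k'.+1 * qb Q n' k'.+1
  end.

Lemma qb0 Q n : qb Q n 0 = 1. Proof. by case: n. Qed.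
Lemma qbS Q n k : qb Q n.+1 k.+1 = qb Q n k + Q ^+ k.+1 * qb Q n k.+1. Proof. by []. Qed.

Lemma qb_gt Q n k : (n < k)%N -> qb Q n k = 0.
Proof.
elim: n k => [|n ih] [|k] //= hk.
by rewrite !ih ?mulr0 ?addr0 //; lia.
Qed.

Definition qp Q (m : nat) : R := \prod_(j < m) (1 - Q ^+ j.+1).

Lemma qpS Q m : qp Q m.+1 = qp Q m * (1 - Q ^+ m.+1).
Proof. by rewrite /qp big_ord_recr. Qed.

Lemma qb_fact Q n k : (k <= n)%N -> qb Q n k * qp Q k * qp Q (n - k) = qp Q n.
Proof.
elim: n k => [|n ih] [|k] hk.
- by rewrite /qp !big_ord0 !mulr1.
- by [].
- by rewrite qb0 subn0 /qp big_ord0 !mul1r.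
rewrite qbS subSS qpS.
have h1 := ih k hk.
case: (ltngtP k n) => hkn.
- have h2 := ih k.+1 hkn.
  have e : (n - k = (n - k.+1).+1)%N by lia.
  have e3 : qp Q (n - k) = qp Q (n - k.+1) * (1 - Q ^+ (n - k)).
    by rewrite {1}e qpS -e.
  rewrite qpS in h2.
  have e2 : (Q ^+ n.+1 = Q ^+ k.+1 * Q ^+ (n - k)) by rewrite -exprD; congr (_ ^+ _); lia.
  rewrite qpS e2 e3.
  transitivity (qb Q n k * qp Q k * (qp Q (n - k.+1) * (1 - Q ^+ (n - k))) * (1 - Q ^+ k.+1) +
     Q ^+ k.+1 * (qb Q n k.+1 * (qp Q k * (1 - Q ^+ k.+1)) * qp Q (n - k.+1)) * (1 - Q ^+ (n - k))).
    by ring.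
  by rewrite -e3 h1 h2; ring.
- by exfalso; lia.
- subst k; rewrite (qb_gt Q (ltnSn n)) mulr0 addr0 subnn qpS.
  move: h1; rewrite subnn => h1.
  transitivity (qb Q n n * qp Q n * qp Q 0 * (1 - Q ^+ n.+1)); first by ring.
  by rewrite h1.
Qed.

Lemma qbinom Q x y N : \prod_(0 <= j < N) (x + y * Q ^+ j) =
  \sum_(0 <= k < N.+1) Q ^+ 'C(k, 2) * qb Q N k * y ^+ k * x ^+ (N - k).
Proof.
elim: N y => [|N ih] y.
  by rewrite big_geq // big_nat1 !expr0 !mulr1.
rewrite big_nat_recl // expr0 mulr1.
under eq_bigr do rewrite exprS mulrA.
rewrite ih [in RHS]big_nat_recl // bin_small // expr0 qb0 !mul1r subn0.
under [in RHS]eq_bigr do rewrite qbS.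
have hA : y * (\sum_(0 <= i < N.+1) Q ^+ 'C(i, 2) * qb Q N i * (y * Q) ^+ i * x ^+ (N - i)) =
   \sum_(0 <= i < N.+1) Q ^+ 'C(i.+1, 2) * qb Q N i * y ^+ i.+1 * x ^+ (N.+1 - i.+1).
  rewrite mulr_sumr; apply: eq_bigr => i _.
  by rewrite binS bin1 exprD exprMn exprS subSS; ring.
have hB : x * (\sum_(0 <= i < N.+1) Q ^+ 'C(i, 2) * qb Q N i * (y * Q) ^+ i * x ^+ (N - i)) =
   x ^+ N.+1 + \sum_(0 <= i < N) Q ^+ 'C(i.+1, 2) * (Q ^+ i.+1 * qb Q N i.+1) * y ^+ i.+1 * x ^+ (N.+1 - i.+1).
  rewrite big_nat_recl // bin_small // expr0 qb0 !mul1r subn0 mulrDr -exprS; congr (_ + _).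
  rewrite mulr_sumr; apply: eq_big_nat => i hi.
  have e : (N - i.+1 = N.+1 - i.+1 - 1)%N by lia.
  have e' : (N.+1 - i.+1 = (N.+1 - i.+1 - 1).+1)%N by lia.
  rewrite e {2}e' exprS binS bin1 exprD exprMn; rewrite !exprS; ring.
have hC : \sum_(0 <= i < N.+1) Q ^+ 'C(i.+1, 2) * (Q ^+ i.+1 * qb Q N i.+1) * y ^+ i.+1 * x ^+ (N.+1 - i.+1) =
   \sum_(0 <= i < N) Q ^+ 'C(i.+1, 2) * (Q ^+ i.+1 * qb Q N i.+1) * y ^+ i.+1 * x ^+ (N.+1 - i.+1).
  by rewrite big_nat_recr //= (qb_gt Q (ltnSn N)) mulr0 mulr0 mul0r mul0r addr0.
under [in RHS]eq_bigr do rewrite mulrDr mulrDl mulrDl.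
rewrite big_split /= hC mulrDl hA hB.
ring.
Qed.

End QB.

Definition sqd n k := if (k < n)%N then ((n - k) * (n - k))%N else ((k - n) * (k - n))%N.
Definition trd n k := if (k < n)%N then ((n - k) * (n - k).-1)%N else ((k - n) * (k - n).+1)%N.

Lemma sqd_exp n k : (0 < n)%N -> (k <= n + n)%N ->
  (k * k.-1 + (n + n).-1 * (n + n - k) = n * n.-1 + (n + n).-1 * n + sqd n k)%N.
Proof.
move=> hn hk; rewrite /sqd; case: ifP => h.
- have [d ->] : exists d, n = (k + d.+1)%N by exists (n - k).-1; lia.
  have -> : (k + d.+1 - k = d.+1)%N by lia.
  case: k {h hk} => [|k]; rewrite /=; nia.
- have [d [c [-> ->]]] : exists d c, n = (d + c)%N /\ k = (d + c + d)%N.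
    by exists (k - n)%N, (n - (k - n))%N; lia.
  have -> : (d + c + d - (d + c) = d)%N by lia.
  have -> : (d + c + (d + c) - (d + c + d) = c)%N by lia.
  case: d hn {h hk} => [|d] /=.
    by case: c => [|c] //= _; nia.
  move=> _; rewrite !addSn /=; nia.
Qed.

Lemma trd_exp n k : (sqd n k + k = trd n k + n)%N.
Proof.
rewrite /sqd /trd; case: ifP => h.
- have [d ->] : exists d, n = (k + d.+1)%N by exists (n - k).-1; lia.
  have -> : (k + d.+1 - k = d.+1)%N by lia.
  rewrite /=; nia.
- have [d ->] : exists d, k = (n + d)%N by exists (k - n)%N; lia.
  have -> : (n + d - n = d)%N by lia.
  nia.
Qed.

Lemma bin2x m : ('C(m, 2) * 2 = m * m.-1)%N.
Proof.
elim: m => [|m ih] //; rewrite binS bin1 mulnDl ih.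
case: m {ih} => [|m] //=; nia.
Qed.

Lemma sum_double n : (\sum_(0 <= j < n) (j * 2) = n * n.-1)%N.
Proof. by rewrite -big_distrl /= bin2_sum bin2x. Qed.

Lemma JT (n : nat) (y : {poly int}) : (0 < n)%N ->
  \prod_(0 <= m < n) ((1 + y * 'X^((m * 2).+1)) * (y + 'X^((m * 2).+1))) =
  \sum_(0 <= k < (n + n).+1) 'X^(sqd n k) * y ^+ k * qb ('X^2) (n + n) k.
Proof.
move=> hn.
pose x : {poly int} := 'X^((n + n).-1).
have H := qbinom ('X^2) x y (n + n).
pose s := (n * n.-1 + (n + n).-1 * n)%N.
apply: (@mulfI _ ('X^s)); first by rewrite expf_neq0 // polyX_eq0.
have HR : 'X^s * (\sum_(0 <= k < (n + n).+1) 'X^(sqd n k) * y ^+ k * qb ('X^2) (n + n) k) =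
   \sum_(0 <= k < (n + n).+1) ('X^2) ^+ 'C(k, 2) * qb ('X^2) (n + n) k * y ^+ k * x ^+ (n + n - k).
  rewrite mulr_sumr; apply: eq_big_nat => k hk.
  rewrite /x -!exprM.
  have ee : (2 * 'C(k, 2) + (n + n).-1 * (n + n - k) = s + sqd n k)%N.
    by rewrite mulnC bin2x sqd_exp //; lia.
  transitivity ('X^(s + sqd n k) * y ^+ k * qb ('X^2) (n + n) k : {poly int}).
    by rewrite exprD; ring.
  by rewrite -ee exprD; ring.
rewrite HR -H; clear HR H.
rewrite (@big_cat_nat _ _ _ n 0 (n + n)) //; last by lia.
rewrite (big_addn 0 (n + n) n) addnK.
have H1 : \prod_(0 <= j < n) (x + y * 'X^2 ^+ j) =
   'X^(n * n.-1) * \prod_(0 <= j < n) (y + 'X^((j * 2).+1)).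
  transitivity (\prod_(0 <= j < n) ('X^(j * 2) * (y + 'X^(((n - j.+1) * 2).+1)))).
    apply: eq_big_nat => j hj; rewrite /x -exprM.
    have -> : ((n + n).-1 = j * 2 + ((n - j.+1) * 2).+1)%N by lia.
    rewrite exprD mulnC; ring.
  rewrite big_split /= prodrXr sum_double; congr (_ * _).
  rewrite [RHS]big_nat_rev; apply: eq_big_nat => j hj.
  by rewrite add0n.
have H2 : \prod_(0 <= j < n) (x + y * 'X^2 ^+ (j + n)) =
   'X^((n + n).-1 * n) * \prod_(0 <= j < n) (1 + y * 'X^((j * 2).+1)).
  transitivity (\prod_(0 <= j < n) ('X^((n + n).-1) * (1 + y * 'X^((j * 2).+1)))).
    apply: eq_big_nat => j hj; rewrite /x -exprM.
    have -> : (2 * (j + n) = (n + n).-1 + (j * 2).+1)%N by lia.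
    rewrite exprD; ring.
  by rewrite big_split /= prodr_const_nat subn0 -exprM.
rewrite H1 H2 big_split /= exprD; ring.
Qed.

Definition Tp (n : nat) : {poly int} := 1 + (\sum_(0 <= j < n) 'X^(j.+1 * j.+1)) *+ 2.
Definition Pp (n : nat) : {poly int} := \sum_(0 <= j < n) 'X^(j * j.+1).

Lemma sum_sqd n : \sum_(0 <= k < (n + n).+1) 'X^(sqd n k) = Tp n :> {poly int}.
Proof.
rewrite (@big_cat_nat _ _ _ n 0 (n + n).+1) //; last by lia.
rewrite (big_addn 0 (n + n).+1 n).
have -> : ((n + n).+1 - n = n.+1)%N by lia.
rewrite big_nat_recl // /Tp.
have -> : sqd n (0 + n) = 0%N by rewrite /sqd add0n ltnn subnn.
have h1 : \sum_(0 <= i < n) 'X^(sqd n i) = \sum_(0 <= j < n) 'X^(j.+1 * j.+1) :> {poly int}.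
  rewrite big_nat_rev; apply: eq_big_nat => j hj; congr ('X^ _).
  rewrite /sqd ifT; last by lia.
  by have -> : (n - (0 + n - j.+1) = j.+1)%N by lia.
have h2 : \sum_(0 <= i < n) 'X^(sqd n (i.+1 + n)) = \sum_(0 <= j < n) 'X^(j.+1 * j.+1) :> {poly int}.
  apply: eq_big_nat => j hj; congr ('X^ _).
  rewrite /sqd ifF; last by lia.
  by have -> : (j.+1 + n - n = j.+1)%N by lia.
rewrite /= h1 h2 expr0 mulr2n; ring.
Qed.

Lemma sum_trd n : \sum_(0 <= k < (n + n).+1) 'X^(trd n k) = Pp n + Pp n.+1 :> {poly int}.
Proof.
rewrite (@big_cat_nat _ _ _ n 0 (n + n).+1) //; last by lia.
rewrite (big_addn 0 (n + n).+1 n).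
have -> : ((n + n).+1 - n = n.+1)%N by lia.
rewrite /Pp /=; congr (_ + _).
  rewrite big_nat_rev; apply: eq_big_nat => j hj; congr ('X^ _).
  rewrite /trd ifT; last by lia.
  have -> : (n - (0 + n - j.+1) = j.+1)%N by lia.
  by rewrite /= mulnC.
apply: eq_big_nat => j hj; congr ('X^ _).
rewrite /trd ifF; last by lia.
by have -> : (j + n - n = j)%N by lia.
Qed.

Lemma JT1 n : (0 < n)%N ->
  (\prod_(0 <= m < n) (1 + 'X^((m * 2).+1))) ^+ 2 =
  \sum_(0 <= k < (n + n).+1) 'X^(sqd n k) * qb ('X^2) (n + n) k :> {poly int}.
Proof.
move=> hn; have := JT 1 hn.
under eq_bigr do rewrite !mul1r.
under [in X in _ = X -> _]eq_bigr do rewrite expr1n mulr1.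
by move=> <-; rewrite expr2 big_split.
Qed.

Lemma JTq n : (0 < n)%N ->
  \prod_(0 <= m < n) ((1 + 'X^((m * 2).+2)) * (1 + 'X^(m * 2))) =
  \sum_(0 <= k < (n + n).+1) 'X^(trd n k) * qb ('X^2) (n + n) k :> {poly int}.
Proof.
move=> hn; apply: (@mulfI _ ('X^n)); first by rewrite expf_neq0 // polyX_eq0.
have hL : 'X^n * \prod_(0 <= m < n) ((1 + 'X^((m * 2).+2)) * (1 + 'X^(m * 2))) =
   \prod_(0 <= m < n) ((1 + 'X * 'X^((m * 2).+1)) * ('X + 'X^((m * 2).+1))) :> {poly int}.
  rewrite -{1}(subn0 n) -prodr_const_nat -big_split /=; apply: eq_bigr => m _.
  rewrite !exprS; ring.
have hR : 'X^n * \sum_(0 <= k < (n + n).+1) 'X^(trd n k) * qb ('X^2) (n + n) k =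
   \sum_(0 <= k < (n + n).+1) 'X^(sqd n k) * 'X ^+ k * qb ('X^2) (n + n) k :> {poly int}.
  rewrite mulr_sumr; apply: eq_bigr => k _.
  by rewrite mulrA -!exprD addnC -trd_exp.
by rewrite hL hR JT.
Qed.

Lemma prod_pair (f : nat -> {poly int}) n :
  \prod_(0 <= j < n + n) f j = \prod_(0 <= m < n) (f (m * 2)%N * f (m * 2).+1).
Proof.
elim: n => [|n ih]; first by rewrite !big_geq.
rewrite addnS addSn !big_nat_recr //= ?ih; try lia.
have -> : (n * 2 = n + n)%N by lia.
by rewrite mulrA.
Qed.

Definition OA n : {poly int} := \prod_(0 <= m < n) (1 + 'X^((m * 2).+1)).
Definition CC n : {poly int} := \prod_(0 <= m < n) (1 + 'X^((m * 2).+2)).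

Lemma prodA n : OA n * EP 1 (n + n) * EP 4 n = EP 2 (n + n) * EP 2 n.
Proof.
rewrite /OA /EP !prod_pair -!big_split /=; apply: eq_bigr => m _.
rewrite !mul1n.
have -> : (2 * (m * 2).+1 = (m * 2).+1 + (m * 2).+1)%N by lia.
have -> : (4 * m.+1 = 2 * ((m * 2).+1).+1)%N by lia.
have -> : (2 * m.+1 = ((m * 2).+1).+1)%N by lia.
rewrite exprD; ring.
Qed.

Lemma prodC n : CC n * EP 2 n = EP 4 n.
Proof.
rewrite /CC /EP -big_split /=; apply: eq_bigr => m _.
have -> : (4 * m.+1 = (m * 2).+2 + (m * 2).+2)%N by lia.
have -> : (2 * m.+1 = (m * 2).+2)%N by lia.
rewrite exprD; ring.
Qed.

Lemma prodB n : \prod_(0 <= m < n.+1) ((1 + 'X^((m * 2).+2)) * (1 + 'X^(m * 2))) =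
  2%:R * CC n.+1 * CC n :> {poly int}.
Proof.
rewrite big_split /= [X in _ * X]big_nat_recl // ?mul0n ?expr0.
rewrite -[\prod_(0 <= i < n) _]/(CC n) -[\prod_(0 <= i < n.+1) _]/(CC n.+1).
ring.
Qed.

Notation u k := (fps_inv (fk k)).

Lemma fu k : fk k * u k = 1.
Proof. by apply: fps_invP; rewrite fk0. Qed.

Lemma dl_u d k : (0 < k)%N -> dl d (u k) = u (d.+1 * k).
Proof.
move=> hk; apply: (@inv_uniq (fk (d.+1 * k))); last exact: fu.
by rewrite -dl_fk // -rmorphM fu rmorph1.
Qed.

Lemma EP_eqN k N n : (0 < k)%N -> (N <= n)%N -> eqN N (emb (EP k n)) (fk k).
Proof. by move=> hk hn; apply: eqN_sym; apply: fk_eqN. Qed.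

Lemma qp_EP m : qp ('X^2) m = EP 2 m.
Proof. by rewrite /qp /EP big_mkord; apply: eq_bigr => j _; rewrite -exprM. Qed.

Lemma eqN_cancel N A B k : eqN N (A * fk k) (B * fk k) -> eqN N A B.
Proof.
move=> h.
have eA : A = A * fk k * u k by rewrite -mulrA fu mulr1.
have eB : B = B * fk k * u k by rewrite -mulrA fu mulr1.
by rewrite eA eB; apply: eqN_mulr.
Qed.

Lemma qb_lim N n k : (N <= k)%N -> (N <= n + n - k)%N -> (k <= n + n)%N ->
  eqN N (emb (qb ('X^2) (n + n) k)) (u 2).
Proof.
move=> h1 h2 h3.
have e := @qb_fact _ ('X^2 : {poly int}) _ _ h3. rewrite !qp_EP in e.
apply: (@eqN_cancel _ _ _ 2); apply: (@eqN_cancel _ _ _ 2).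
rewrite [X in eqN _ _ X](_ : _ = fk 2); last by rewrite (mulrC (u 2)) fu mul1r.
apply: (@eqN_trans _ _ (emb (qb ('X^2) (n + n) k) * emb (EP 2 k) * emb (EP 2 (n + n - k)))).
  by apply: eqN_mul; [apply: eqN_mul; [apply: eqN_refl|]|]; apply: eqN_sym; apply: EP_eqN.
by rewrite -!rmorphM e; apply: EP_eqN => //; lia.
Qed.

Lemma coef_sumX_stable (g : nat -> nat) i m m' : (m <= m')%N ->
  (forall j, (m <= j < m')%N -> (i < g j)%N) ->
  (\sum_(0 <= j < m') 'X^(g j) : {poly int})`_i = (\sum_(0 <= j < m) 'X^(g j) : {poly int})`_i.
Proof.
move=> hm h; rewrite (@big_cat_nat _ _ _ m 0 m') //= coefD.
rewrite [X in _ + X](_ : _ = 0) ?addr0 // coef_sum big1_seq // => j /andP [_].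
rewrite mem_index_iota => hj; rewrite coefXn; have := h j hj.
by case: eqP => // ->; rewrite ltnn.
Qed.

Definition th : fps := fun i => (Tp i)`_i.
Definition ps2 : fps := fun i => (Pp i.+1)`_i.

Lemma th_eqN N n : (N <= n)%N -> eqN N th (emb (Tp n)).
Proof.
move=> hn i hi; rewrite /th /emb /Tp !coefD.
by rewrite (@coef_sumX_stable _ i i n) //; [lia | move=> j hj; nia].
Qed.

Lemma ps2_eqN N n : (N < n)%N -> eqN N ps2 (emb (Pp n)).
Proof.
move=> hn i hi; rewrite /ps2 /emb /Pp.
by rewrite (@coef_sumX_stable _ i i.+1 n) //; [lia | move=> j hj; nia].
Qed.

Lemma eqN_sum_nat N m n (A B : nat -> fps) :
  (forall i, (m <= i < n)%N -> eqN N (A i) (B i)) ->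
  eqN N (\sum_(m <= i < n) A i) (\sum_(m <= i < n) B i).
Proof.
move=> h; rewrite big_seq_cond [X in eqN _ _ X]big_seq_cond.
by apply: eqN_sum => i /andP [hi _]; apply: h; rewrite -mem_index_iota.
Qed.

Lemma sum_lim N n (g : nat -> nat) :
  (forall k, (k < (n + n).+1)%N -> (g k <= N)%N -> (N <= k)%N /\ (N <= n + n - k)%N) ->
  eqN N (emb (\sum_(0 <= k < (n + n).+1) 'X^(g k) * qb ('X^2) (n + n) k))
        (emb (\sum_(0 <= k < (n + n).+1) 'X^(g k)) * u 2).
Proof.
move=> h; rewrite !rmorph_sum mulr_suml; apply: eqN_sum_nat => k /andP [_ hk].
rewrite rmorphM.
case: (leqP (g k) N) => hg.
  have [h1 h2] := h k hk hg.
  by apply: eqN_mull; apply: qb_lim => //; lia.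
by apply: eqN_trans (eqN_Xn0 _ hg) (eqN_sym (eqN_Xn0 _ hg)).
Qed.

Lemma gauss1 : fk 2 ^+ 5 * u 1 ^+ 2 * u 4 ^+ 2 = th.
Proof.
have key : forall N, eqN N ((fk 2 ^+ 2 * u 1 * u 4) ^+ 2) (th * u 2).
  move=> N; pose n := (N + N).+2.
  have hn : (0 < n)%N by [].
  have hOA : eqN N (emb (OA n)) (fk 2 ^+ 2 * u 1 * u 4).
    apply: (@eqN_cancel _ _ _ 1); apply: (@eqN_cancel _ _ _ 4).
    rewrite [X in eqN _ _ X](_ : _ = fk 2 * fk 2); last first.
      transitivity (fk 2 ^+ 2 * (fk 1 * u 1) * (fk 4 * u 4)); first by ring.
      by rewrite !fu !mulr1 expr2.
    apply: (@eqN_trans _ _ (emb (OA n) * emb (EP 1 (n + n)) * emb (EP 4 n))).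
      by apply: eqN_mul; [apply: eqN_mul; [apply: eqN_refl|]|]; apply: eqN_sym; apply: EP_eqN => //; lia.
    by rewrite -!rmorphM prodA rmorphM; apply: eqN_mul; apply: EP_eqN => //; lia.
  apply: eqN_trans (eqN_exp 2 (eqN_sym hOA)) _.
  rewrite -rmorphXn JT1 //.
  apply: eqN_trans (sum_lim _) _.
    move=> k hk; rewrite /sqd; case: ifP => hkn hs.
      have : (n - k <= N)%N by nia.
      rewrite /n; lia.
    have : (k - n <= N)%N by nia.
    rewrite /n; lia.
  rewrite sum_sqd; apply: eqN_mulr; apply: eqN_sym; apply: th_eqN; rewrite /n; lia.
have e := eqN_all key.
transitivity ((fk 2 ^+ 2 * u 1 * u 4) ^+ 2 * fk 2); first by ring.
by rewrite e -mulrA (mulrC (u 2)) fu mulr1.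
Qed.

Lemma CC_eqN N m : (N <= m)%N -> eqN N (emb (CC m)) (fk 4 * u 2).
Proof.
move=> hm; apply: (@eqN_cancel _ _ _ 2).
rewrite -mulrA (mulrC (u 2)) fu mulr1.
apply: (@eqN_trans _ _ (emb (CC m) * emb (EP 2 m))).
  by apply: eqN_mull; apply: eqN_sym; apply: EP_eqN.
by rewrite -rmorphM prodC; apply: EP_eqN.
Qed.

Lemma fps_cancel2 (A B : fps) : A + A = B + B -> A = B.
Proof.
move=> h; apply: fpsext => i; have := congr1 (fun H : fps => H i) h.
rewrite !fps_addE; lia.
Qed.

Lemma gauss2 : ps2 = fk 4 ^+ 2 * u 2.
Proof.
have key : forall N, eqN N ((ps2 + ps2) * u 2) (2%:R * (fk 4 * u 2) * (fk 4 * u 2)).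
  move=> N; pose n' := (N + N).+1; pose n := n'.+1.
  have hn : (0 < n)%N by [].
  apply: (@eqN_trans _ _ (emb (\sum_(0 <= k < (n + n).+1) 'X^(trd n k)) * u 2)).
    rewrite sum_trd rmorphD; apply: eqN_mulr; apply: eqN_add; apply: ps2_eqN; rewrite /n /n'; lia.
  apply: (@eqN_trans _ _ (emb (\sum_(0 <= k < (n + n).+1) 'X^(trd n k) * qb ('X^2) (n + n) k))).
    apply: eqN_sym; apply: sum_lim.
    move=> k hk; rewrite /trd; case: ifP => hkn hs.
      have : ((n - k).-1 <= N)%N.
        have : ((n - k).-1 <= (n - k) * (n - k).-1)%N by case: (n - k)%N => [|m] //=; nia.
        lia.
      rewrite /n /n'; lia.
    have : (k - n <= N)%N by nia.
    rewrite /n /n'; lia.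
  rewrite -JTq // /n prodB !rmorphM rmorph_nat.
  apply: eqN_mul; [apply: eqN_mul; [apply: eqN_refl|]|]; apply: CC_eqN; rewrite /n'; lia.
have e := eqN_all key.
apply: fps_cancel2.
transitivity ((ps2 + ps2) * u 2 * fk 2).
  by rewrite -mulrA (mulrC (u 2)) fu mulr1.
rewrite e.
transitivity (2%:R * (fk 4 ^+ 2 * u 2) * (fk 2 * u 2)); first by ring.
by rewrite fu mulr1 mulr2n mulrDl mul1r.
Qed.

Lemma sum_pair (f : nat -> {poly int}) n :
  \sum_(0 <= j < n + n) f j = \sum_(0 <= m < n) (f (m * 2)%N + f (m * 2).+1).
Proof.
elim: n => [|n ih]; first by rewrite !big_geq.
rewrite addnS addSn !big_nat_recr //= ?ih; try lia.
have -> : (n * 2 = n + n)%N by lia.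
by rewrite addrA.
Qed.

Lemma Tp_dis n : Tp (n + n) = Tp n \Po 'X^4 + 2%:R * 'X * (Pp n \Po 'X^4).
Proof.
rewrite /Tp /Pp sum_pair rmorphD rmorph1 raddfMn !raddf_sum /=.
have Xc : forall a, 'X^a \Po 'X^4 = 'X^(4 * a) :> {poly int}.
  by move=> a; rewrite comp_Xn_poly -exprM.
have -> : \sum_(0 <= i < n) ('X^(i.+1 * i.+1) \Po 'X^4) = \sum_(0 <= i < n) 'X^(4 * (i.+1 * i.+1)) :> {poly int}.
  by apply: eq_bigr => i _; rewrite Xc.
have -> : \sum_(0 <= i < n) ('X^(i * i.+1) \Po 'X^4) = \sum_(0 <= i < n) 'X^(4 * (i * i.+1)) :> {poly int}.
  by apply: eq_bigr => i _; rewrite Xc.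
rewrite big_split /= mulr_sumr.
have hB : \sum_(0 <= i < n) 'X^((i * 2).+2 * (i * 2).+2) =
   \sum_(0 <= i < n) 'X^(4 * (i.+1 * i.+1)) :> {poly int}.
  by apply: eq_bigr => i _; congr ('X^ _); lia.
have hA : (\sum_(0 <= i < n) 'X^((i * 2).+1 * (i * 2).+1)) *+ 2 =
   \sum_(0 <= i < n) 2%:R * 'X * 'X^(4 * (i * i.+1)) :> {poly int}.
  rewrite -sumrMnl; apply: eq_bigr => i _.
  have -> : ((i * 2).+1 * (i * 2).+1 = (4 * (i * i.+1)).+1)%N by nia.
  by rewrite exprS mulr2n; ring.
rewrite hB -hA mulrnDl; ring.
Qed.

Lemma embD (p q : {poly int}) : emb (p + q) = emb p + emb q. Proof. exact: rmorphD. Qed.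
Lemma embM (p q : {poly int}) : emb (p * q) = emb p * emb q. Proof. exact: rmorphM. Qed.
Lemma emb2 : emb 2%:R = 2%:R. Proof. exact: rmorph_nat. Qed.

Lemma dissect : th = dl 3 th + 2%:R * Xf * dl 3 ps2.
Proof.
apply: eqN_all => N; pose n := N.+1.
apply: (@eqN_trans _ _ (emb (Tp (n + n)))); first by apply: th_eqN; rewrite /n; lia.
rewrite Tp_dis embD !embM emb2 !iota_comp.
apply: eqN_add; first by apply: eqN_dl; apply: eqN_sym; apply: th_eqN.
by apply: eqN_mull; apply: eqN_dl; apply: eqN_sym; apply: ps2_eqN.
Qed.

Lemma dlM d F G : dl d (F * G) = dl d F * dl d G. Proof. exact: rmorphM. Qed.
Lemma dlX d F k : dl d (F ^+ k) = dl d F ^+ k. Proof. exact: rmorphXn. Qed.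
Lemma dlD d F G : dl d (F + G) = dl d F + dl d G. Proof. exact: rmorphD. Qed.
Lemma dl2 d : dl d 2%:R = 2%:R. Proof. exact: rmorph_nat. Qed.

Lemma dl3f2 : dl 3 (fk 2) = fk 8. Proof. exact: dl_fk. Qed.
Lemma dl3f4 : dl 3 (fk 4) = fk 16. Proof. exact: dl_fk. Qed.
Lemma dl3u1 : dl 3 (u 1) = u 4. Proof. exact: dl_u. Qed.
Lemma dl3u2 : dl 3 (u 2) = u 8. Proof. exact: dl_u. Qed.
Lemma dl3u4 : dl 3 (u 4) = u 16. Proof. exact: dl_u. Qed.
Lemma dl1f2 : dl 1 (fk 2) = fk 4. Proof. exact: dl_fk. Qed.
Lemma dl1f4 : dl 1 (fk 4) = fk 8. Proof. exact: dl_fk. Qed.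
Lemma dl1f8 : dl 1 (fk 8) = fk 16. Proof. exact: dl_fk. Qed.
Lemma dl1u1 : dl 1 (u 1) = u 2. Proof. exact: dl_u. Qed.
Lemma dl1u4 : dl 1 (u 4) = u 8. Proof. exact: dl_u. Qed.
Lemma dl1u8 : dl 1 (u 8) = u 16. Proof. exact: dl_u. Qed.

Lemma key_id : u 1 ^+ 2 =
  u 2 ^+ 5 * fk 8 ^+ 5 * u 16 ^+ 2 + 2%:R * Xf * fk 4 ^+ 2 * fk 16 ^+ 2 * u 8 * u 2 ^+ 5.
Proof.
have h := dissect.
rewrite -gauss1 gauss2 !dlM !dl3f2 !dl3f4 !dl3u1 !dl3u2 !dl3u4 in h.
transitivity (u 1 ^+ 2 * (fk 2 * u 2) ^+ 5 * (fk 4 * u 4) ^+ 2).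
  by rewrite !fu !expr1n !mulr1.
transitivity ((fk 2 ^+ 5 * u 1 ^+ 2 * u 4 ^+ 2) * (fk 4 ^+ 2 * u 2 ^+ 5)); first by ring.
rewrite h.
transitivity (u 2 ^+ 5 * fk 8 ^+ 5 * u 16 ^+ 2 * (fk 4 * u 4) ^+ 2 +
  2%:R * Xf * fk 4 ^+ 2 * fk 16 ^+ 2 * u 8 * u 2 ^+ 5); first by ring.
by rewrite fu expr1n mulr1.
Qed.

Lemma scaleE (F : fps) : fps_scale 2 F = 2%:R * F.
Proof.
apply: fpsext => n; rewrite mulr2n mulrDl mul1r fps_addE /fps_scale; lia.
Qed.

Lemma zpowN F n : fps_zpow F (Negz n) = fps_inv F ^+ n.+1.
Proof. exact: fps_expE. Qed.
Lemma zpowP F n : fps_zpow F (Posz n) = F ^+ n.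
Proof. exact: fps_expE. Qed.

Lemma XfE (G : fps) n : (Xf * dl 1 G) (2 * n)%N = 0.
Proof.
case: n => [|n]; first exact: Xf0.
have -> : (2 * n.+1 = (2 * n).+1.+1)%N by lia.
by rewrite XfS dl1_odd.
Qed.

Theorem lemma5p2 (c : nat) (hc : (1 <= c)%N) :
  (forall n : nat,
     abar c (2 * n)%N =
     fps_mul (fps_exp (fk 2) c.-1)
       (fps_mul (fps_exp (fk 4) 5)
          (fps_mul (fps_zpow (fk 1) (- (2%:Z * c%:Z + 2%:Z)))
                   (fps_zpow (fk 8) (-2)))) n)
  /\
  (forall n : nat,
     abar c (2 * n).+1 =
     fps_scale 2
       (fps_mul (fps_exp (fk 8) 2)
          (fps_mul (fps_zpow (fk 4) (-1))
             (fps_exp (fps_mul (fk 2) (fps_zpow (fk 1) (-2))) c.+1))) n).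
Proof.
set E := fps_mul (fps_exp (fk 2) c.-1) _.
set O := fps_scale 2 _.
suff main : abar c = dl 1 E + Xf * dl 1 O.
  split => n; rewrite main fps_addE.
    by rewrite XfE addr0 dl1_even.
  by rewrite XfS dl1_odd add0r dl1_even.
case: c hc @E @O => // c _ E O.
have zA : (- (2%:Z * c.+1%:Z + 2%:Z)) = Negz (c + c + 3) by rewrite NegzE; lia.
rewrite /E /O /abar zA !fps_mulE !fps_expE scaleE.
rewrite (_ : (-2 : int) = Negz 1) // (_ : (-1 : int) = Negz 0) // !zpowN.
case: c {E O zA} => [|c].
  rewrite (_ : (3%:Z - 2%:Z * 1%:Z) = Posz 1) // zpowP.
  rewrite !dlM !dlX ?dl2 !dl1f2 !dl1f4 !dl1f8 !dl1u1 !dl1u4 !dl1u8 key_id.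
  transitivity (u 2 ^+ 4 * fk 8 ^+ 5 * u 16 ^+ 2 * (fk 2 * u 2) +
     2%:R * Xf * fk 4 ^+ 2 * fk 16 ^+ 2 * u 8 * u 2 ^+ 4 * (fk 2 * u 2)); first by ring.
  by rewrite fu !mulr1; ring.
rewrite (_ : (3%:Z - 2%:Z * c.+2%:Z) = Negz (c + c)); last by rewrite NegzE; lia.
rewrite zpowN.
rewrite (_ : ((c.+1 + c.+1 + 3).+1 = c + c + 6)%N); last by lia.
rewrite (_ : (c.+3 = c + 3)%N); last by lia.
rewrite (_ : ((c + c).+1 = c + c + 1)%N); last by lia.
rewrite (_ : (c.+2.-1 = c + 1)%N); last by lia.
rewrite !exprD.
rewrite !dlM !dlX !dlM ?dl2 !dl1f2 !dl1f4 !dl1f8 !dl1u1 !dl1u4 !dl1u8 key_id.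
rewrite !exprMn.
ring.
Qed.
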